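(* Let $\phi:R\to S$ be a cyclically pure ring map. If $S$ has strong avoidance, then $R$ has strong avoidance. In particular this holds whenever $\phi$ is a pure morphism.
   Context: All rings are commutative with $1\neq 0$. A ring map $\phi:R\to S$ is cyclically pure if for every ideal $I$ of $R$ the induced map $R/I\to S/IS$ is injective; it is pure if $M\to M\otimes_R S$, $x\mapsto x\otimes1$, is injective for every $R$-module $M$. A ring map $\psi:A\to B$ has avoidance if whenever $I,I_1,\ldots,I_n$ are ideals of $A$ with $I\subseteq\bigcup_{k=1}^n I_k$, then $IB\subseteq I_kB$ for some $k$. A ring $B$ has strong avoidance if every ring map $A\to B$ has avoidance. *)

(* Defs.v *)
From HB Require Import structures.
From mathcomp Require Import all_boot all_order all_algebra.
Set Implicit Arguments. Unset Strict Implicit. Unset Printing Implicit Defensive.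
Import GRing.Theory.
Local Open Scope ring_scope.

Definition is_ideal (R : comNzRingType) (I : R -> Prop) : Prop :=
  [/\ I 0, (forall x y, I x -> I y -> I (x + y)) & (forall r x, I x -> I (r * x))].

(* The extended ideal I S = ideal of S generated by phi(I):
   all finite sums  \sum s_i * phi(a_i)  with a_i in I. *)
Definition ext_ideal (R S : comNzRingType) (phi : {rmorphism R -> S})
  (I : R -> Prop) : S -> Prop :=
  fun b => exists l : seq (R * S),
    (forall p, p \in l -> I p.1) /\ b = \sum_(p <- l) p.2 * phi p.1.

(* phi is cyclically pure: for every ideal I, R/I -> S/IS is injective,
   i.e. phi x = phi y mod IS implies x = y mod I. *)
Definition cyclically_pure (R S : comNzRingType) (phi : {rmorphism R -> S}) : Prop :=
  forall I : R -> Prop, is_ideal I ->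
    forall x y : R, ext_ideal phi I (phi x - phi y) -> I (x - y).

Definition avoidance (A B : comNzRingType) (psi : {rmorphism A -> B}) : Prop :=
  forall (I : A -> Prop) (n : nat) (J : 'I_n -> A -> Prop),
    is_ideal I -> (forall k, is_ideal (J k)) ->
    (forall x, I x -> exists k, J k x) ->
    exists k, forall b, ext_ideal psi I b -> ext_ideal psi (J k) b.

Definition strong_avoidance (B : comNzRingType) : Prop :=
  forall (A : comNzRingType) (psi : {rmorphism A -> B}), avoidance psi.

(* Main.v *)
Require Import Defs.
From mathcomp Require Import all_boot all_algebra.
Import GRing.Theory.
Local Open Scope ring_scope.

Lemma ext_is_ideal (A B : comNzRingType) (psi : {rmorphism A -> B}) (J : A -> Prop) :
  is_ideal (ext_ideal psi J).
Proof.
split.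
- by exists [::]; split => //; rewrite big_nil.
- move=> x y [l1 [H1 ->]] [l2 [H2 ->]]; exists (l1 ++ l2); split.
    by move=> p; rewrite mem_cat => /orP [] ?; [apply: H1|apply: H2].
  by rewrite big_cat.
- move=> r x [l [H ->]]; exists [seq (p.1, r * p.2) | p <- l]; split.
    by move=> p /mapP [q Hq ->] /=; apply: H.
  by rewrite big_map mulr_sumr; apply: eq_bigr => p _ /=; rewrite mulrA.
Qed.

Theorem lemma4p6 (R S : comNzRingType) (phi : {rmorphism R -> S}) :
  cyclically_pure phi -> strong_avoidance S -> strong_avoidance R.
Proof.
move=> cp sa A psi I n J HI HJ Hcov.
have [k Hk] := sa A (phi \o psi) I n J HI HJ Hcov.
exists k => b [l [Hl Hb]].
have := @cp _ (@ext_is_ideal _ _ psi (J k)) b 0.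
rewrite rmorph0 !subr0; apply.
have [l' [Hl' Hb']] : ext_ideal (phi \o psi) (J k) (phi b).
  apply: Hk; exists [seq (p.1, phi p.2) | p <- l]; split.
    by move=> p /mapP [q Hq ->] /=; apply: Hl.
  by rewrite Hb rmorph_sum big_map; apply: eq_bigr => p _ /=; rewrite rmorphM.
exists [seq (psi p.1, p.2) | p <- l']; split.
  move=> p /mapP [q Hq ->] /=; exists [:: (q.1, 1)]; split.
    by move=> p0; rewrite inE => /eqP -> /=; apply: Hl'.
  by rewrite big_seq1 mul1r.
by rewrite Hb' big_map.
Qed.
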